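(* Let $(\mathbb Q;+,1,\neq)$ be the structure on the rationals where $+$ is the ternary relation $\{(x,y,z):x+y=z\}$, $1$ is the constant $1$, and $\neq$ is the binary disequality relation. Then every $\omega$-polymorphism of $(\mathbb Q;+,1,\neq)$ is a projection.
   Context: An $\omega$-polymorphism of a structure $\mathfrak A$ is a homomorphism $\mathfrak A^\kappa\to\mathfrak A$ from a direct power with $\kappa\le\omega$ (relations and constants interpreted coordinatewise). A projection is a map $A^\kappa\to A$ of the form $\bar x\mapsto x_i$. *)

(* Defs.v *)
From mathcomp Require Import all_boot all_algebra.
Set Implicit Arguments. Unset Strict Implicit. Unset Printing Implicit Defensive.
Import GRing.Theory.
Local Open Scope ring_scope.

Definition plus_rel (x y z : rat) : Prop := x + y = z.
Definition neq_rel (x y : rat) : Prop := x <> y.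

Definition is_power_hom (I : Type) (f : (I -> rat) -> rat) : Prop :=
  [/\ (forall x y z : I -> rat,
         (forall i, plus_rel (x i) (y i) (z i)) -> plus_rel (f x) (f y) (f z)),
      f (fun _ => 1) = 1
    & (forall x y : I -> rat,
         (forall i, neq_rel (x i) (y i)) -> neq_rel (f x) (f y))].

Definition is_projection (I : Type) (f : (I -> rat) -> rat) : Prop :=
  exists i : I, forall x : I -> rat, f x = x i.

(* Main.v *)
Require Import Defs.
From mathcomp Require Import all_boot all_algebra.
From Stdlib Require Import Classical.
Import GRing.Theory Num.Theory.
Local Open Scope ring_scope.

Section Gen.
Variables (I : Type) (f : (I -> rat) -> rat) (d : I -> rat).
Hypothesis dinj : forall i j, d i = d j -> i = j.
Hypothesis hf : is_power_hom f.

Lemma fadd x y z : (forall i, x i + y i = z i) -> f x + f y = f z.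
Proof. by case: hf => H _ _; apply: H. Qed.

Lemma fneq x y : (forall i, x i <> y i) -> f x <> f y.
Proof. by case: hf => _ _ H; apply: H. Qed.

Lemma f1 : f (fun _ => 1) = 1.
Proof. by case: hf. Qed.

Lemma fext x y : (forall i, x i = y i) -> f x = f y.
Proof.
move=> H; have H0 : f (fun _ => 0) = 0.
  have := @fadd (fun _ => 0) (fun _ => 0) (fun _ => 0) (fun _ => addr0 _).
  by move/eqP; rewrite -subr_eq0 addrK => /eqP.
have := @fadd x (fun _ => 0) y (fun i => etrans (addr0 _) (H i)).
by rewrite H0 addr0.
Qed.

Lemma f0 : f (fun _ => 0) = 0.
Proof.
have := @fadd (fun _ => 0) (fun _ => 0) (fun _ => 0) (fun _ => addr0 _).
by move/eqP; rewrite -subr_eq0 addrK => /eqP.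
Qed.

Lemma fnat c (n : nat) : f (fun _ => n%:R * c) = n%:R * f (fun _ => c).
Proof.
elim: n => [|n IH].
  by rewrite !mul0r f0.
rewrite -[in LHS](@fadd (fun _ => n%:R * c) (fun _ => c) (fun _ => n.+1%:R * c)).
  by rewrite IH mulrSr mulrDl mul1r.
by move=> i; rewrite mulrSr mulrDl mul1r.
Qed.

Lemma fopp c : f (fun _ => - c) = - f (fun _ => c).
Proof.
have := @fadd (fun _ => c) (fun _ => - c) (fun _ => 0) (fun _ => subrr _).
by rewrite f0 => /eqP; rewrite addrC addr_eq0 => /eqP.
Qed.

Lemma fint c (m : int) : f (fun _ => m%:~R * c) = m%:~R * f (fun _ => c).
Proof.
case: m => n; first exact: fnat.
rewrite NegzE.
rewrite (@fext _ (fun _ => - (n.+1%:R * c))); last by move=> i; rewrite mulrNz mulNr.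
by rewrite fopp fnat mulrNz mulNr.
Qed.

Lemma fconst c : f (fun _ => c) = c.
Proof.
have Hd := denq_neq0 c.
have E : (denq c)%:~R * f (fun _ => c) = (denq c)%:~R * c.
  rewrite -fint (@fext _ (fun _ => (numq c)%:~R * 1)).
    by rewrite fint f1 mulr1 numqE mulrC.
  by move=> i; rewrite mulr1 numqE mulrC.
apply: (mulfI _ E); by rewrite intr_eq0.
Qed.

Lemma fK x : exists i, x i = f x.
Proof.
apply: NNPP => H.
apply: (@fneq x (fun _ => f x)); last by rewrite fconst.
by move=> i Hi; apply: H; exists i.
Qed.

Lemma f01 (P : I -> bool) : f (fun j => if P j then 1 else 0) = 0
  \/ f (fun j => if P j then 1 else 0) = 1.
Proof. by case: (fK (fun j => if P j then 1 else 0)) => i <-; case: (P i); auto. Qed.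

Theorem gen_proj : is_projection f.
Proof.
case: (fK d) => i0 Hi0.
pose e := fun j => if d j == d i0 then (1:rat) else 0.
have He : f e = 1.
  case: (f01 (fun j => d j == d i0)) => // He0; exfalso.
  case: (fK (fun j => d j + e j)) => j.
  rewrite -(@fadd d e (fun j => d j + e j)) // He0 addr0 -Hi0 /e.
  case: eqP => [->|]; last by rewrite addr0.
  by move/eqP; rewrite -subr_eq0 addrAC subrr add0r oner_eq0.
have Hh : forall P : I -> bool, f (fun j => if P j then 1 else 0) = if P i0 then 1 else 0.
  move=> P; case Pi: (P i0).
    pose g := fun j => if P j && (d j != d i0) then (1:rat) else 0.
    have Hp : forall j, g j + e j = (if P j then 1 else 0).
      move=> j; rewrite /g /e; case: eqP => [/dinj ->|]; first by rewrite Pi /= add0r.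
      by move=> _; case: (P j); rewrite /= addr0.
    have H := @fadd g e (fun j => if P j then 1 else 0) Hp.
    rewrite He in H; rewrite -H.
    case: (f01 (fun j => P j && (d j != d i0))) => E; rewrite -/g in E; rewrite E ?add0r //.
    exfalso; move: H; rewrite E; case: (f01 P) => ->.
      by move/eqP; idtac.
    by move/eqP; idtac.
  pose g := fun j => if P j || (d j == d i0) then (1:rat) else 0.
  have Hp : forall j, (if P j then 1 else 0) + e j = g j.
    move=> j; rewrite /g /e; case: eqP => [/dinj ->|]; first by rewrite Pi /= add0r.
    by move=> _; case: (P j); rewrite /= ?addr0 ?orbF.
  have H := @fadd (fun j => if P j then 1 else 0) e g Hp.
  rewrite He in H.
  case: (f01 P) => // E; rewrite E in H; exfalso; move: H.
  case: (f01 (fun j => P j || (d j == d i0))) => E2; rewrite -/g in E2; rewrite E2; by move/eqP.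
exists i0 => x; apply: NNPP => Hc.
pose h := fun j => if x j == f x then (1:rat) else 0.
case: (fK (fun j => x j + h j)) => j.
rewrite -(@fadd x h (fun j => x j + h j)) // Hh.
have -> : (x i0 == f x) = false by apply/eqP => E; apply: Hc.
rewrite addr0 /h; case: eqP => [->|]; last by rewrite addr0.
by move/eqP; rewrite -subr_eq0 addrAC subrr add0r oner_eq0.
Qed.
End Gen.

(* omega-polymorphisms: kappa <= omega, i.e. kappa = n finite ('I_n) or kappa = omega (nat) *)
Theorem lemma9 :
  (forall (n : nat) (f : ('I_n -> rat) -> rat),
      is_power_hom f -> is_projection f)
  /\ (forall f : (nat -> rat) -> rat, is_power_hom f -> is_projection f).
Proof.
split.
  move=> n f hf; apply: (@gen_proj _ f (fun i => (nat_of_ord i)%:R)) => // i j.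
  by move/eqP; rewrite eqr_nat => /eqP /val_inj.
move=> f hf; apply: (@gen_proj _ f (fun i => i%:R)) => // i j.
by move/eqP; rewrite eqr_nat => /eqP.
Qed.
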